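(* Let $C \subseteq \mathbb{R}^n$ be a nonempty closed convex set, let $\mathcal{H}$ be a hyperplane arrangement in $\mathbb{R}^n$, let $x \in \mathbb{R}^n$, and let $\delta$ be a convex distance function to $x$. Let $A$ be a pattern such that $R_A$ contains a point of $\operatorname{argmin}_{v \in C} \delta(v)$, and let $A'$ be a pattern with $R_{A'} \cap C \neq \emptyset$. Then there is a sequence of patterns $A = A^1, A^2, \dots, A^{k}, A^{k+1} = A'$ such that: (i) $A^i$ and $A^{i+1}$ are neighbors for all $i \in [k]$; (ii) $\operatorname{dist}(R_{A^i} \cap C) \le \operatorname{dist}(R_{A^{i+1}} \cap C)$ for all $i \in [k]$; (iii) $R_{A^i} \cap C \neq \emptyset$ for all $i \in [k+1]$.
   Context: A hyperplane is a set $\{v : a^\top v = b\}$ with $a \in \mathbb{R}^n\setminus\{0\}$, $b \in \mathbb{R}$; its halfspaces are $H^{\le} = \{v : a^\top v \le b\}$ and $H^{\ge} = \{v : a^\top v \ge b\}$. A hyperplane arrangement $\mathcal{H}$ is a finite set of hyperplanes, each with a fixed representation $(a,b)$. A pattern is a function $P : \mathcal{H} \to \{-1,1\}$, and its region is the closed polyhedron $R_P := \bigcap_{P(H)=-1} H^{\le} \cap \bigcap_{P(H)=1} H^{\ge}$. Two patterns are neighbors if they differ on exactly one hyperplane. A convex distance function to $x$ is a convex, continuous function $\delta : \mathbb{R}^n \to [0,\infty)$ with bounded sublevel sets and $\delta(x)=0$ (e.g. $\delta(v) = \|v - x\|_p$, $p \ge 1$); for a nonempty closed set $S$, $\operatorname{dist}(S)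 := \min_{v \in S} \delta(v)$. $[k] = \{1,\dots,k\}$. *)

(* Defs.v *)
From HB Require Import structures.
From mathcomp Require Import all_boot all_order all_algebra.
From mathcomp Require Import all_classical all_reals all_analysis.
Set Implicit Arguments. Unset Strict Implicit. Unset Printing Implicit Defensive.
Import Order.TTheory GRing.Theory Num.Theory.
Import numFieldNormedType.Exports.
Local Open Scope classical_set_scope.
Local Open Scope ring_scope.

Definition dotv {R : realType} {n : nat} (a v : 'rV[R]_n) : R :=
  \sum_(j < n) a ord0 j * v ord0 j.

Definition hyperplane {R : realType} {n : nat} (a : 'rV[R]_n) (b : R) : set 'rV[R]_n :=
  [set v | dotv a v = b].

Definition arrangement {R : realType} {n m : nat}
    (a : 'I_m -> 'rV[R]_n) (b : 'I_m -> R) : Prop :=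
  (forall i, a i != 0) /\
  (forall i j, hyperplane (a i) (b i) = hyperplane (a j) (b j) -> i = j).

(* A pattern P : H -> {-1,1} is encoded as a function 'I_m -> bool,
   with [true] meaning +1 and [false] meaning -1. *)
Definition pattern (m : nat) := 'I_m -> bool.

Definition region {R : realType} {n m : nat}
    (a : 'I_m -> 'rV[R]_n) (b : 'I_m -> R) (P : pattern m) : set 'rV[R]_n :=
  [set v | forall i, if P i then b i <= dotv (a i) v else dotv (a i) v <= b i].

Definition neighbors {m : nat} (P Q : pattern m) : Prop :=
  #|[pred i | P i != Q i]| = 1%N.

Definition convex_set_of {R : realType} {n : nat} (C : set 'rV[R]_n) : Prop :=
  forall u v (t : R), C u -> C v -> 0 <= t -> t <= 1 ->
    C (t *: u + (1 - t) *: v).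

Definition convex_fun_of {R : realType} {n : nat} (f : 'rV[R]_n -> R) : Prop :=
  forall u v (t : R), 0 <= t -> t <= 1 ->
    f (t *: u + (1 - t) *: v) <= t * f u + (1 - t) * f v.

Definition convex_distance {R : realType} {n : nat}
    (delta : 'rV[R]_n -> R) (x : 'rV[R]_n) : Prop :=
  [/\ convex_fun_of delta, continuous delta,
      (forall v, 0 <= delta v),
      (forall c : R, bounded_set [set v | delta v <= c]) &
      delta x = 0].

(* dist(S) = min_{v in S} delta v; for the nonempty closed sets considered
   the minimum exists, so it coincides with the infimum used here. *)
Definition dist {R : realType} {n : nat} (delta : 'rV[R]_n -> R)
    (S : set 'rV[R]_n) : R := inf [set delta v | v in S].

Definition argmin_on {R : realType} {n : nat} (delta : 'rV[R]_n -> R)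
    (C : set 'rV[R]_n) : set 'rV[R]_n :=
  [set v | C v /\ forall w, C w -> delta v <= delta w].

(* Main.v *)
Require Import Defs.
From HB Require Import structures.
From mathcomp Require Import all_boot all_order all_algebra.
From mathcomp Require Import all_classical all_reals all_analysis.
From mathcomp Require Import ring lra.
Import Order.TTheory GRing.Theory Num.Theory.
Import numFieldNormedType.Exports.
Local Open Scope classical_set_scope.
Local Open Scope ring_scope.

Section Aux.
Variables (R : realType) (n m : nat) (a : 'I_m -> 'rV[R]_n) (b : 'I_m -> R).

Lemma dotv_comb (c u v : 'rV[R]_n) (t : R) :
  dotv c (t *: u + (1 - t) *: v) = t * dotv c u + (1 - t) * dotv c v.
Proof.
rewrite /dotv !mulr_sumr -big_split /=; apply: eq_bigr => j _.
rewrite !mxE; ring.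
Qed.

Definition gg (B : pattern m) j v :=
  if B j then dotv (a j) v - b j else b j - dotv (a j) v.

Lemma gg_comb B j u v t :
  gg B j (t *: u + (1 - t) *: v) = t * gg B j u + (1 - t) * gg B j v.
Proof. rewrite /gg dotv_comb; case: (B j); ring. Qed.

Lemma side_gg (B : pattern m) j v :
  (if B j then b j <= dotv (a j) v else dotv (a j) v <= b j) <-> 0 <= gg B j v.
Proof. rewrite /gg; case: (B j); by rewrite subr_ge0. Qed.

Lemma side_ggN (B : pattern m) j v :
  (if ~~ B j then b j <= dotv (a j) v else dotv (a j) v <= b j) <-> gg B j v <= 0.
Proof. rewrite /gg; case: (B j) => /=; by rewrite subr_le0. Qed.

Definition flip (B : pattern m) (i : 'I_m) : pattern m :=
  fun j => if j == i then ~~ B j else B j.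

Lemma keyK (C : set 'rV[R]_n) (delta : 'rV[R]_n -> R) (A B : pattern m)
    (w z : 'rV[R]_n) (i1 : 'I_m) :
  convex_set_of C -> convex_fun_of delta ->
  B i1 != A i1 ->
  region a b B w -> C w -> region a b A z -> C z -> delta z <= delta w ->
  exists i, B i != A i /\ exists p, region a b (flip B i) p /\ C p /\ delta p <= delta w.
Proof.
move=> cC cd Bi1 rw Cw rz Cz dzw.
pose T j := gg B j w / (gg B j w - gg B j z).
have G0 : forall j, 0 <= gg B j w by move=> j; apply/side_gg/rw.
have G1 : forall j, B j != A j -> gg B j z <= 0.
  move=> j /negPf BA; apply/side_ggN; have := rz j.
  by case: (B j) BA; case: (A j).
have Tk : forall j, B j != A j -> forall t, 0 <= t -> t <= T j ->
   0 <= t * gg B j z + (1 - t) * gg B j w /\ (t = T j -> t * gg B j z + (1 - t) * gg B j w = 0).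
  move=> j hj t t0 tT.
  have g0 := G0 j; have g1 := G1 j hj.
  have -> : t * gg B j z + (1 - t) * gg B j w = gg B j w - t * (gg B j w - gg B j z) by ring.
  have [d0|dp] := eqVneq (gg B j w - gg B j z) 0.
    have e0 : gg B j w = 0 by apply/eqP; rewrite eq_le g0 andbT; move: d0 => /eqP; rewrite subr_eq0 => /eqP ->.
    by rewrite d0 e0 mulr0 subr0.
  have dpos : 0 < gg B j w - gg B j z by rewrite lt_def dp /= subr_ge0 (le_trans g1 g0).
  split; last by move=> ->; rewrite /T mulrAC -mulrA divff // mulr1 subrr.
  rewrite subr_ge0; move: tT; rewrite /T ler_pdivlMr //.
have T01 : forall j, B j != A j -> 0 <= T j <= 1.
  move=> j hj; have g0 := G0 j; have g1 := G1 j hj.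
  rewrite /T divr_ge0 ?subr_ge0 ?(le_trans g1 g0) //=.
  have [d0|dp] := eqVneq (gg B j w - gg B j z) 0; first by rewrite d0 invr0 mulr0.
  have dpos : 0 < gg B j w - gg B j z by rewrite lt_def dp /= subr_ge0 (le_trans g1 g0).
  by rewrite ler_pdivrMr // mul1r lerDl oppr_ge0.
case: (@arg_minP _ R _ i1 [pred j | B j != A j] T Bi1) => i /= hi Tmin.
exists i; split => //.
have /andP [t0 t1] := T01 i hi.
exists (T i *: z + (1 - T i) *: w); split; last split.
- move=> j; rewrite /flip; case: eqP => [->|/eqP ji].
  + apply/side_ggN; rewrite gg_comb; by rewrite ((Tk i hi (T i) t0 (lexx _)).2 erefl).
  + apply/side_gg; rewrite gg_comb.
    have [hj|] := boolP (B j != A j).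
      exact: (Tk j hj (T i) t0 (Tmin j hj)).1.
    rewrite negbK => /eqP BAj.
    have gz : 0 <= gg B j z by apply/side_gg; rewrite BAj; exact: rz.
    by rewrite addr_ge0 // mulr_ge0 // ?subr_ge0.
- exact: cC.
- apply: le_trans (cd _ _ _ t0 t1) _.
  have h := ler_wpM2l t0 dzw; lra.
Qed.

End Aux.
Arguments keyK {R n m a b C delta A B w z i1}.
Arguments flip {m}.

Theorem mainTheorem4 (R : realType) (n m : nat)
    (C : set 'rV[R]_n) (a : 'I_m -> 'rV[R]_n) (b : 'I_m -> R)
    (x : 'rV[R]_n) (delta : 'rV[R]_n -> R) (A A' : pattern m) :
  C !=set0 -> closed C -> convex_set_of C ->
  arrangement a b ->
  convex_distance delta x ->
  (region a b A `&` argmin_on delta C) !=set0 ->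
  (region a b A' `&` C) !=set0 ->
  exists (k : nat) (s : nat -> pattern m),
    [/\ s 0%N = A, s k = A',
        (forall i, (i < k)%N -> neighbors (s i) (s i.+1)),
        (forall i, (i < k)%N ->
           dist delta (region a b (s i) `&` C) <=
           dist delta (region a b (s i.+1) `&` C)) &
        (forall i, (i <= k)%N -> (region a b (s i) `&` C) !=set0)].
Proof.
move=> _ _ cC _ [cd _ dpos _ _] [z [rz [Cz zmin]]] hA'.
have hA : (region a b A `&` C) !=set0 by exists z.
have lbd : forall S : set 'rV[R]_n, has_lbound [set delta v | v in S].
  by move=> S; exists 0 => _ [v _ <-].
suff: forall d (B : pattern m), #|[pred j | B j != A j]| = d ->
  (region a b B `&` C) !=set0 ->
  exists (k : nat) (s : nat -> pattern m),
    [/\ s 0%N = A, s k = B,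
        (forall i, (i < k)%N -> neighbors (s i) (s i.+1)),
        (forall i, (i < k)%N ->
           dist delta (region a b (s i) `&` C) <=
           dist delta (region a b (s i.+1) `&` C)) &
        (forall i, (i <= k)%N -> (region a b (s i) `&` C) !=set0)].
  by move=> H; exact: (H _ A' erefl hA').
elim=> [|d IH] B hd hB.
  have BA : B = A.
    apply/funext => j; have := card0_eq hd j; rewrite !inE /=.
    by move/negbT; rewrite negbK => /eqP.
  subst B; exists 0%N, (fun _ => A); split => // i; rewrite ?leqn0 // => /eqP -> //.
have [w0 [rw0 Cw0]] := hB.
have /card_gt0P [i1 hi1] : (0 < #|[pred j | B j != A j]|)%N by rewrite hd.
pose D' := [pred i | (B i != A i) && `[< (region a b (flip B i) `&` C) !=set0 >]].
pose F := fun i => dist delta (region a b (flip B i) `&` C).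
have [i1' hi1'] : exists i, D' i.
  have [i [hi [p [rp [Cp _]]]]] := keyK cC cd hi1 rw0 Cw0 rz Cz (zmin _ Cw0).
  exists i; rewrite /D' /= hi /=; apply/asboolP; by exists p.
case: (@arg_minP _ R _ i1' D' F hi1') => i0 /= /andP [hi0 /asboolP ne0] Fmin.
have distle : F i0 <= dist delta (region a b B `&` C).
  rewrite /dist; apply: lb_le_inf.
    by exists (delta w0), w0.
  move=> _ [v [rv Cv] <-].
  have [i [hi [p [rp [Cp dp]]]]] := keyK cC cd hi1 rv Cv rz Cz (zmin _ Cv).
  have Di : D' i by rewrite /D' /= hi /=; apply/asboolP; exists p.
  apply: le_trans (Fmin i Di) _; apply: le_trans dp.
  by apply: ge_inf; [exact: lbd | exists p].
have cardf : #|[pred j | flip B i0 j != A j]| = d.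
  move: hd; rewrite (cardD1 i0) !inE /= hi0 add1n => -[<-].
  apply: eq_card => j; rewrite !inE /flip; have [->|ji] := eqVneq j i0 => /=.
    by move: hi0; case: (B i0); case: (A i0).
  by [].
have [k [s [s0 sk sn sd sne]]] := IH _ cardf ne0.
exists k.+1, (fun i => if (i <= k)%N then s i else B); split.
- by rewrite ?leq0n.
- by rewrite ?ltnn.
- move=> i ik0; have [->|ik'] := eqVneq i k.
    rewrite leqnn ltnn sk /neighbors -(card1 i0); apply: eq_card => j.
    rewrite !inE /flip; have [->|ji] := eqVneq j i0 => /=; first by case: (B i0).
    by rewrite eqxx.
  have ik : (i < k)%N by rewrite ltn_neqAle ik' -ltnS.
  by rewrite ik (ltnW ik); exact: sn.
- move=> i ik0; have [->|ik'] := eqVneq i k.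
    by rewrite leqnn ltnn sk.
  have ik : (i < k)%N by rewrite ltn_neqAle ik' -ltnS.
  by rewrite ik (ltnW ik); exact: sd.
- move=> i ik; case: leqP => [ik'|_]; [exact: sne | exact: hB].
Qed.
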